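(* Let $\mathbf{k}$ be a field, $p\ge3$ and $q\ge1$ integers, $S=\mathbf{k}[e_1,\dots,e_{qp}]$, and in $S[t]$ let $f_0=t^q+e_pt^{q-1}+e_{2p}t^{q-2}+\cdots+e_{qp}$ and $f_k=e_kt^{q-1}+e_{p+k}t^{q-2}+\cdots+e_{(q-1)p+k}$ for $1\le k\le p-1$. Let $I=\langle f_0,\dots,f_{p-1}\rangle\cap S$, and let $J$ be the ideal of $S$ generated by the maximal ($(2q-1)\times(2q-1)$) minors of the matrix $A$ defined below. Then $\sqrt{J}\subseteq\sqrt{I}$. Moreover, when $p$ is prime and $\mathbf{k}=\mathbb{F}_p$, $\sqrt{J}\subseteq I$.
   Context: Set $e_0=1$. $A=[A_0\ A_1\ \cdots\ A_{p-1}]$ is the $(2q-1)\times((q-1)+(p-1)q)$ block matrix where $A_0$ is the $(2q-1)\times(q-1)$ matrix with $(a,c)$ entry $e_{(a-c)p}$ if $0\le a-c\le q$ and $0$ otherwise, and for $1\le i\le p-1$, $A_i$ is the $(2q-1)\times q$ matrix with $(a,c)$ entry $e_{(a-c)p+i}$ if $0\le a-c\le q-1$ and $0$ otherwise. (Thus $[A_0\ A_i]$ is the Sylvester matrix of $f_0$ and $f_i$.) *)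

(* Defs.v *)
From HB Require Import structures.
From mathcomp Require Import all_boot all_order all_algebra.
From mathcomp Require Import mpoly.
Set Implicit Arguments. Unset Strict Implicit. Unset Printing Implicit Defensive.
Import Order.TTheory GRing.Theory.
Local Open Scope ring_scope.

Section Defs.
Variables (k : fieldType) (p q : nat).

(* S = k[e_1, ..., e_{qp}] ; e_j is the variable 'X_(j-1) *)
Definition S := {mpoly k[q * p]}.

Definition e (j : nat) : S :=
  if j == 0%N then 1 else
  if (insub j.-1 : option 'I_(q * p)) is Some i then 'X_i else 0.

Definition f0 : {poly S} := \sum_(j < q.+1) (e (j * p))%:P * 'X^(q - j).

Definition fk (i : nat) : {poly S} := \sum_(j < q) (e (j * p + i))%:P * 'X^(q.-1 - j).

Definition fgen (i : 'I_p) : {poly S} := if val i == 0%N then f0 else fk i.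

Definition in_I (g : S) : Prop :=
  exists c : 'I_p -> {poly S}, g%:P = \sum_(i < p) c i * fgen i.

Definition nrows := (2 * q).-1.
Definition ncols := ((q.-1) + (p.-1) * q)%N.

Definition A0ent (a c : nat) : S :=
  if ((c <= a) && (a - c <= q))%N then e ((a - c) * p) else 0.

Definition Aient (i a c : nat) : S :=
  if ((c <= a) && (a - c <= q.-1))%N then e ((a - c) * p + i) else 0.

Definition A0 : 'M[S]_(nrows, q.-1) := \matrix_(a, c) A0ent a c.

Definition Ai (i : nat) : 'M[S]_(nrows, q) := \matrix_(a, c) Aient i a c.

(* [A_1 ... A_{p-1}] : column c lies in block A_{c/q + 1}, at local column c mod q *)
Definition Arest : 'M[S]_(nrows, (p.-1) * q) :=
  \matrix_(a, c) Aient (c %/ q).+1 a (c %% q).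

Definition A : 'M[S]_(nrows, ncols) := row_mx A0 Arest.

Definition incr_cols (s : {ffun 'I_nrows -> 'I_ncols}) : bool :=
  [forall i : 'I_nrows, forall j : 'I_nrows, (i < j)%N ==> (s i < s j)%N].

Definition maxminor (s : {ffun 'I_nrows -> 'I_ncols}) : S := \det (colsub s A).

Definition in_J (g : S) : Prop :=
  exists c : {ffun 'I_nrows -> 'I_ncols} -> S,
    g = \sum_(s | incr_cols s) c s * maxminor s.

End Defs.

(* Main.v *)
Require Import Defs.
From HB Require Import structures.
From mathcomp Require Import all_boot all_order all_algebra.
From mathcomp Require Import mpoly.
From mathcomp Require Import zify.
Set Implicit Arguments. Unset Strict Implicit. Unset Printing Implicit Defensive.
Import GRing.Theory.
Local Open Scope ring_scope.

Section Proof.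
Variables (k : fieldType) (p q : nat).
Hypothesis hp : (3 <= p)%N.
Hypothesis hq : (1 <= q)%N.

Local Notation SS := (S k p q).
Local Notation PS := {poly SS}.

Definition cf : k -> PS := (@polyC SS) \o (@mpolyC (q * p) k).
Definition inId (F : PS) := exists c : 'I_p -> PS, F = \sum_(i < p) c i * fgen k q i.
Definition D (j : nat) : PS :=
  if ((0 < j) && (j <= q * p) && (q.-1 * p < j))%N then
    (if (j - q.-1 * p == p)%N then f0 k p q else fk k p q (j - q.-1 * p))
  else 0.
Definition h (i : 'I_(q * p)) : PS := ('X_i)%:P - D i.+1.
Definition Psi := mmap cf h.

Lemma inId0 : inId 0.
Proof. by exists (fun _ => 0); rewrite big1 // => i _; rewrite mul0r. Qed.

Lemma inIdD a b : inId a -> inId b -> inId (a + b).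
Proof.
move=> [c1 ->] [c2 ->]; exists (fun i => c1 i + c2 i).
by rewrite -big_split /=; apply: eq_bigr => i _; rewrite mulrDl.
Qed.

Lemma inIdM x a : inId a -> inId (x * a).
Proof.
move=> [c ->]; exists (fun i => x * c i).
by rewrite mulr_sumr; apply: eq_bigr => i _; rewrite mulrA.
Qed.

Lemma inId_fgen i : inId (fgen k q i).
Proof.
exists (fun j => (j == i)%:R); rewrite (bigD1 i) //= eqxx mul1r big1 ?addr0 //.
by move=> j /negbTE ->; rewrite mul0r.
Qed.

Definition cong a b := inId (a - b).

Lemma congD a b c d : cong a b -> cong c d -> cong (a + c) (b + d).
Proof.
move=> h1 h2; rewrite /cong.
have -> : a + c - (b + d) = (a - b) + (c - d) by rewrite opprD addrACA.
exact: inIdD.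
Qed.

Lemma congM a b c d : cong a b -> cong c d -> cong (a * c) (b * d).
Proof.
move=> h1 h2; rewrite /cong.
have -> : a * c - b * d = c * (a - b) + b * (c - d).
  by rewrite mulrBr mulrBr [c * a]mulrC [c * b]mulrC addrA subrK.
by apply: inIdD; apply: inIdM.
Qed.

Lemma congR a : cong a a.
Proof. by rewrite /cong subrr; exact: inId0. Qed.

Lemma congX a b n : cong a b -> cong (a ^+ n) (b ^+ n).
Proof.
move=> hab; elim: n => [|n IH]; first by rewrite !expr0; exact: congR.
by rewrite !exprS; apply: congM.
Qed.

Lemma inId_D j : inId (D j).
Proof.
rewrite /D; case: ifP => [/andP[/andP[j0 jle] jlt]|_]; last exact: inId0.
case: ifP => [_|hne].
  have p0 : (0 < p)%N by lia.
  by have := inId_fgen (Ordinal p0); rewrite /fgen /=.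
have hl : (j - q.-1 * p < p)%N.
  move/negbT: hne; move: jle jlt; case: q hq => // q' _ /=.
  rewrite mulSn => ??; lia.
have := inId_fgen (Ordinal hl); rewrite /fgen /=.
have -> : (j - q.-1 * p == 0)%N = false by apply/negbTE; lia.
by [].
Qed.

Lemma PsiD a b : Psi (a + b) = Psi a + Psi b.
Proof. exact: rmorphD. Qed.
Lemma PsiM a b : Psi (a * b) = Psi a * Psi b.
Proof. exact: rmorphM. Qed.
Lemma PsiC c : Psi c%:MP = (c%:MP)%:P.
Proof. exact: mmapC. Qed.
Lemma PsiXm m : Psi 'X_[m] = \prod_(i < q * p) h i ^+ m i.
Proof. exact: mmapX. Qed.
Lemma PsiXi i : Psi 'X_i = h i.
Proof. by rewrite /Psi mmapX mmap1U. Qed.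
Lemma Psi0 : Psi 0 = 0.
Proof. exact: rmorph0. Qed.
Lemma Psi1 : Psi 1 = 1.
Proof. exact: rmorph1. Qed.
Lemma PsiX a n : Psi (a ^+ n) = Psi a ^+ n.
Proof. exact: rmorphXn. Qed.

Lemma cong_all g : cong (g%:P) (Psi g).
Proof.
elim/mpolyind: g => [|c m g _ _ IH].
  by rewrite Psi0 /cong polyC0 subr0; exact: inId0.
rewrite polyCD PsiD; apply: congD; last exact: IH.
rewrite -mul_mpolyC polyCM PsiM PsiC PsiXm.
apply: congM; first exact: congR.
rewrite mpolyXE_id rmorph_prod.
apply: (big_ind2 cong); first exact: congR.
  by move=> ????; apply: congM.
move=> i _; rewrite rmorphXn; apply: congX.
by rewrite /cong /h opprB addrC subrK; exact: inId_D.
Qed.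

Lemma ker_I g : Psi g = 0 -> in_I g.
Proof.
move=> h0; have := cong_all g; rewrite /cong h0 subr0 => -[c hc].
by exists c.
Qed.

Lemma Psi_e j : Psi (e k p q j) = (e k p q j)%:P - D j.
Proof.
rewrite /e; case: eqP => [->|/eqP j0].
  by rewrite Psi1 polyC1 /D /= subr0.
case: insubP => [i hi vi|hn].
  rewrite PsiXi /h vi.
  by have -> : (j.-1).+1 = j by lia.
rewrite Psi0 polyC0 sub0r /D.
have -> : (j <= q * p)%N = false by move: hn; rewrite -ltnNge; lia.
by rewrite andbF oppr0.
Qed.

Lemma sum_window (F : nat -> PS) N c L : (c + L <= N)%N ->
  (forall a, ((a < c) || (c + L <= a))%N -> F a = 0) ->
  \sum_(a < N) F a = \sum_(j < L) F (c + j)%N.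
Proof.
move=> hN hz; rewrite -(big_mkord xpredT F).
rewrite (@big_cat_nat _ _ _ c 0 N) //=; last by lia.
rewrite big_nat_cond big1 ?add0r; last by move=> a /andP[/andP[_ ha] _]; apply: hz; rewrite ha.
rewrite (@big_cat_nat _ _ _ (c + L) c N) ?leq_addr //=.
rewrite [X in _ + X]big_nat_cond [X in _ + X]big1 ?addr0; last first.
  by move=> a /andP[/andP[ha _] _]; apply: hz; rewrite ha orbT.
have -> : \sum_(c <= a < c + L) F a = \sum_(0 + c <= a < c + L) F a by rewrite add0n.
rewrite big_addn addKn big_mkord.
by apply: eq_bigr => j _; rewrite addnC.
Qed.

Lemma Z0 : \sum_(j < q.+1) ((e k p q (j * p))%:P - D (j * p)) * 'X^(q - j) = 0.
Proof.
under eq_bigr do rewrite mulrBl.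
rewrite sumrB.
have -> : \sum_(j < q.+1) (e k p q (j * p))%:P * 'X^(q - j) = f0 k p q by [].
rewrite big_ord_recr /= big1; last first.
  move=> j _; rewrite /D /=.
  have hj : (j * p <= q.-1 * p)%N by apply: leq_mul => //; rewrite -ltnS (ltn_predK (ltn_ord j)).
  by rewrite ifF ?mul0r //; apply/negP => /andP[_]; rewrite ltnNge hj.
rewrite add0r /D.
have -> : ((0 < q * p) && (q * p <= q * p) && (q.-1 * p < q * p))%N = true.
  apply/andP; split; first (apply/andP; split => //; rewrite muln_gt0; lia).
  rewrite ltn_mul2r; lia.
have -> : (q * p - q.-1 * p == p)%N.
  by rewrite -mulnBl; case: q hq => // q' _; rewrite /= subSnn mul1n.
by rewrite subnn expr0 mulr1 subrr.
Qed.

Lemma Zk i : (1 <= i < p)%N ->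
  \sum_(j < q) ((e k p q (j * p + i))%:P - D (j * p + i)) * 'X^(q.-1 - j) = 0.
Proof.
move=> /andP[i1 ip].
under eq_bigr do rewrite mulrBl.
rewrite sumrB.
have -> : \sum_(j < q) (e k p q (j * p + i))%:P * 'X^(q.-1 - j) = fk k p q i by [].
have q0 : (q.-1 < q)%N by rewrite prednK.
rewrite (bigD1 (Ordinal q0)) //= big1; last first.
  move=> j /eqP jne; rewrite /D.
  have jl : (j < q.-1)%N.
    have := ltn_ord j; move: jne => /eqP jne.
    have : (nat_of_ord j != q.-1) by apply: contra jne => /eqP hh; apply/eqP/val_inj.
    lia.
  have hj : (j * p + p <= q.-1 * p)%N by rewrite -mulSnr leq_mul2r jl orbT.
  by rewrite ifF ?mul0r //; apply/negP => /andP[_]; lia.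
rewrite addr0 /D.
have hqq : (q.-1 * p + p = q * p)%N by rewrite -mulSnr prednK.
have -> : ((0 < q.-1 * p + i) && (q.-1 * p + i <= q * p) && (q.-1 * p < q.-1 * p + i))%N = true.
  apply/andP; split; [apply/andP; split|]; [by rewrite addn_gt0 i1 orbT | rewrite -hqq leq_add2l; exact: ltnW | by rewrite -{1}(addn0 (q.-1 * p)%N) ltn_add2l].
rewrite addKn.
have -> : (i == p) = false by apply/negbTE; lia.
by rewrite subnn expr0 mulr1 subrr.
Qed.

Definition K := (nrows q).-1.
Definition v : 'rV[PS]_(nrows q) := \row_(a < nrows q) 'X^(K - a).

Lemma vA0 : v *m map_mx Psi (A0 k p q) = 0.
Proof.
apply/matrixP => i c; rewrite !mxE.
have hc := ltn_ord c.
under eq_bigr do rewrite !mxE.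
rewrite (@sum_window (fun a : nat => 'X^(K - a) * Psi (A0ent k p q a c)) (nrows q) c q.+1).
- rewrite (eq_bigr (fun j : 'I_q.+1 => 'X^(K - c - q) * (((e k p q (j * p))%:P - D (j * p)) * 'X^(q - j)))).
    by rewrite -mulr_sumr Z0 mulr0.
  move=> j _; rewrite /A0ent.
  have hj := ltn_ord j.
  rewrite ifT; last by apply/andP; split; [exact: leq_addr | rewrite addKn; exact: hj].
  rewrite addKn Psi_e mulrCA -exprD [LHS]mulrC; congr (_ * 'X^_).
  move: hc hj; rewrite /K /nrows; move: (nat_of_ord c) (nat_of_ord j) => x y; rewrite -!subn1; lia.
- move: hc; rewrite /nrows; move: (nat_of_ord c) => x; rewrite -!subn1; lia.
- move=> a ha; rewrite /A0ent ifF ?Psi0 ?mulr0 //.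
  apply/negbTE; move: ha; lia.
Qed.

Lemma vArest : v *m map_mx Psi (Arest k p q) = 0.
Proof.
apply/matrixP => i0 c; rewrite !mxE.
under eq_bigr do rewrite !mxE.
have hc := ltn_ord c.
have q0 : (0 < q)%N := hq.
have hc' : (c %% q < q)%N by rewrite ltn_mod.
have hi : (1 <= (c %/ q).+1 < p)%N.
  have hd : (c %/ q < p.-1)%N by rewrite ltn_divLR.
  move: hd hp; move: (c %/ q)%N => x; rewrite -!subn1; lia.
rewrite (@sum_window (fun a : nat => 'X^(K - a) * Psi (Aient k p q (c %/ q).+1 a (c %% q))) (nrows q) (c %% q) q).
- rewrite (eq_bigr (fun j : 'I_q => 'X^(K - (c %% q) - q.-1) * (((e k p q (j * p + (c %/ q).+1))%:P - D (j * p + (c %/ q).+1)) * 'X^(q.-1 - j)))).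
    by rewrite -mulr_sumr Zk // mulr0.
  move=> j _; rewrite /Aient.
  have hj := ltn_ord j.
  rewrite ifT; last first.
    apply/andP; split; [exact: leq_addr | rewrite addKn]. 
    by move: hj; rewrite -!subn1; lia.
  rewrite addKn Psi_e mulrCA -exprD [LHS]mulrC; congr (_ * 'X^_).
  move: hc' hj; rewrite /K /nrows; move: (c %% q)%N (nat_of_ord j) => x y; rewrite -!subn1; lia.
- move: hc'; rewrite /nrows; move: (c %% q)%N => x; rewrite -!subn1; lia.
- move=> a ha; rewrite /Aient ifF ?Psi0 ?mulr0 //.
  apply/negbTE; move: ha; move: (c %% q)%N => x; rewrite -!subn1; lia.
Qed.


Lemma vA : v *m map_mx Psi (A k p q) = 0.
Proof. by rewrite /A map_row_mx mul_mx_row vA0 vArest row_mx0. Qed.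

Lemma Psi_minor s : Psi (maxminor k s) = 0.
Proof.
have -> : Psi (maxminor k s) = \det (map_mx Psi (colsub s (A k p q))).
  by rewrite /maxminor; symmetry; apply: det_map_mx.
set B := map_mx Psi (colsub s (A k p q)).
have hv : v *m B = 0.
  apply/matrixP => i j; rewrite !mxE.
  have := congr1 (fun M : 'M[PS]_(1, ncols p q) => M i (s j)) vA; rewrite !mxE => h1.
  by apply: (etrans _ h1); apply: eq_bigr => a _; rewrite !mxE.
have hn : (K < nrows q)%N by rewrite /K /nrows prednK //; lia.
have := congr1 (mulmx^~ (\adj B)) hv.
rewrite mul0mx -mulmxA mul_mx_adj mul_mx_scalar => /matrixP /(_ 0 (Ordinal hn)).
by rewrite !mxE /= subnn expr0 mulr1.
Qed.

Lemma main (g : SS) n : in_J (g ^+ n) -> in_I g.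
Proof.
move=> [c hc]; apply: ker_I.
have h0 : Psi (g ^+ n) = 0.
  rewrite hc; apply: (big_ind (fun x => Psi x = 0)) => [|x y hx hy|s _]; [exact: Psi0 | by rewrite PsiD hx hy addr0 | ].
  by rewrite PsiM Psi_minor mulr0.
move: h0; rewrite PsiX; case: n {hc} => [|n].
  by rewrite expr0 => /eqP; rewrite oner_eq0.
by move/eqP; rewrite expf_eq0 /= => /eqP.
Qed.

End Proof.

Theorem proposition4p1 :
  (forall (k : fieldType) (p q : nat), (3 <= p)%N -> (1 <= q)%N ->
     forall g : S k p q,
       (exists n : nat, in_J (g ^+ n)) -> exists m : nat, in_I (g ^+ m)) /\
  (forall (p q : nat), prime p -> (3 <= p)%N -> (1 <= q)%N ->
     forall g : S 'F_p p q,
       (exists n : nat, in_J (g ^+ n)) -> in_I g).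
Proof.
split.
  move=> k p q hp hq g [n hn]; exists 1%N; rewrite expr1.
  exact: (main hp hq hn).
move=> p q _ hp hq g [n hn].
exact: (main hp hq hn).
Qed.
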